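(* Let $\mathbb{M}$ be an implicitization matrix of $\phi$ (a $d\times d$ matrix), and let $\mathbb{M}^*$ be the $d\times(d-1)$ sub-matrix obtained by erasing the first column of $\mathbb{M}$ (the column corresponding to $P$). Then the gcd of the maximal minors of $\mathbb{M}^*$ equals $F^p$ (up to a nonzero constant) for some $p\in\mathbb{N}$. Moreover the following are equivalent: (1) $\phi$ is birational; (2) $p=0$; (3) $\mathbb{M}^*$ is an inversion matrix of $\phi$.
   Context: $\mathbb{K}$ is a field of characteristic zero. $\phi:\mathbb{P}^2\dashrightarrow\mathbb{P}^3$, $\mathbf{t}=(t_1:t_2:t_3)\mapsto (p_1(\mathbf{t}):\dots:p_4(\mathbf{t}))$, with $p_i\in\mathbb{K}[t_1,t_2,t_3]$ homogeneous of the same degree, $\phi$ generically finite, so the closure of its image is an irreducible surface $S\subset\mathbb{P}^3$. $F\in\mathbb{K}[X_1,\dots,X_4]$ is the implicit equation of $S$ (irreducible homogeneous of minimal degree with $F(p_1,\dots,p_4)\equiv0$, defined up to a nonzero constant). $\mathbb{K}(S)$, $\mathbb{K}(\mathbb{P}^2)$ are the rational function fields (rank over $\mathbb{K}(S)$ of a matrix over $\mathbb{K}[\underline{X}]$ means rank of its image over the fraction field of $\mathbb{K}[\underline{X}]/(F)$); $\phi^\sharp:\mathbb{K}(S)\to\mathbb{K}(\mathbb{P}^2)$, $f\mapsto f\circ\phi$; $\deg\phi=[\mathbb{K}(\mathbb{P}^2):\mathbb{K}(S)]$; $\phi$ is birational iff $\deg\phi=1$. A moving surface of bi-degree $(m;n)$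 ($m,n\ge1$) is a polynomial bihomogeneous of degree $m$ in $\mathbf{t}=(t_1,t_2,t_3)$ and $n$ in $\underline{X}=(X_1,\dots,X_4)$; it follows $\phi$ if it vanishes identically after substituting $X_i=p_i(\mathbf{t})$. An inversion matrix of $\phi$ is a $d\times(d-1)$ matrix $\mathbb{M}$ with entries in $\mathbb{K}[\underline{X}]$ such that: (i) there exist $m\ge1$ and distinct monomials $\mathbf{t}^{\alpha_1},\dots,\mathbf{t}^{\alpha_d}$ of degree $m$ (indexing the rows) with ${}^t\mathbb{M}(\mathbf{t}^{\alpha_1},\dots,\mathbf{t}^{\alpha_d})^t=(M_1,\dots,M_{d-1})^t$, each $M_i$ a moving surface of bi-degree $(m;d_i)$ following $\phi$, and there exist $\mathbf{t}^{\beta_1},\mathbf{t}^{\beta_2},\mathbf{t}^{\beta_3}$ among the $\mathbf{t}^{\alpha_i}$ with $t_1\mathbf{t}^{\beta_3}=t_3\mathbf{t}^{\beta_1}$ and $t_2\mathbf{t}^{\beta_3}=t_3\mathbf{t}^{\beta_2}$; (ii) the rank of $\mathbb{M}$ over $\mathbb{K}(S)$ is exactly $d-1$. An implicitization matrix of $\phi$ is a square $d\times d$ matrix $\mathbb{M}$ with entries in $\mathbb{K}[\underline{X}]$ such that: (1) there exist $m\ge1$ and distinct monomials $\mathbf{t}^{\alpha_1},\dots,\mathbf{t}^{\alpha_d}$ of degree $m$ (indexing the rows) with ${}^t\mathbb{M}(\mathbf{t}^{\alpha_1},\dots,\mathbf{t}^{\alpha_d})^t=(P(\mathbf{t};\underline{X}),M_1,\dots,M_{d-1})^t$,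 where each $M_i$ is a moving surface of bi-degree $(m;d_i)$ following $\phi$ and $P$ is a bihomogeneous polynomial of positive degree in $\underline{X}$, and there exist $\mathbf{t}^{\beta_1},\mathbf{t}^{\beta_2},\mathbf{t}^{\beta_3}$ among the $\mathbf{t}^{\alpha_i}$ with $t_1\mathbf{t}^{\beta_3}=t_3\mathbf{t}^{\beta_1}$ and $t_2\mathbf{t}^{\beta_3}=t_3\mathbf{t}^{\beta_2}$; (2) $\det(\mathbb{M})=c\,F^\delta$ with $\delta\ge1$ an integer and $c\in\mathbb{K}\setminus\{0\}$; (3) if $\phi$ is birational then $\delta=1$. *)

(* Defs.v *)
From HB Require Import structures.
From mathcomp Require Import all_boot all_order all_algebra.
From mathcomp Require Import mpoly.
Set Implicit Arguments. Unset Strict Implicit. Unset Printing Implicit Defensive.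
Import Order.TTheory GRing.Theory.
Local Open Scope ring_scope.

Section Defs.
Variable K : fieldType.

(* Parametrization phi = (p_1 : ... : p_4) with p_i in K[t1,t2,t3];
   variables t1,t2,t3 are 'X_0,'X_1,'X_2 and X1..X4 are 'X_0..'X_3. *)
Definition param := 'I_4 -> {mpoly K[3]}.

Definition evp (p : param) (G : {mpoly K[4]}) : {mpoly K[3]} :=
  G \mPo [tuple p i | i < 4].

Definition mdvd (F G : {mpoly K[4]}) : Prop := exists H, G = F * H.

(* irreducible: non constant, and every factorization has a constant factor
   (the units of K[X] are the nonzero constants) *)
Definition mirreducible (F : {mpoly K[4]}) : Prop :=
  (1 < msize F)%N /\
  forall G H : {mpoly K[4]}, F = G * H -> (msize G <= 1)%N \/ (msize H <= 1)%N.

Definition alg_indep3 (q : 'I_3 -> {mpoly K[3]}) : Prop :=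
  forall G : {mpoly K[3]}, G \mPo [tuple q i | i < 3] = 0 -> G = 0.

(* phi generically finite <=> closure of image is a surface
   <=> trdeg_K K(p_1,..,p_4) = 3 <=> three of the p_i are alg. independent *)
Definition generically_finite (p : param) : Prop :=
  exists f : 'I_3 -> 'I_4, injective f /\ alg_indep3 (fun i => p (f i)).

Definition implicit_equation (p : param) (F : {mpoly K[4]}) : Prop :=
  exists k : nat, F \is k.-homog /\ mirreducible F /\ evp p F = 0 /\
    forall (G : {mpoly K[4]}) (j : nat),
      G \is j.-homog -> mirreducible G -> evp p G = 0 -> (k <= j)%N.

(* phi birational: it has a rational inverse psi = (A_1 : A_2 : A_3) defined on S
   with psi o phi = id, i.e. (A_1(p):A_2(p):A_3(p)) = (t1:t2:t3). *)
Definition birational (p : param) : Prop :=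
  exists (k : nat) (A : 'I_3 -> {mpoly K[4]}),
    (forall i, A i \is k.-homog) /\ (exists i, evp p (A i) != 0) /\
    forall i j : 'I_3, evp p (A i) * 'X_j = evp p (A j) * 'X_i.

(* rank over K(S) = Frac(K[X]/(F)): largest size of a minor that is nonzero
   modulo F *)
Definition nz_minor_S (F : {mpoly K[4]}) m n (A : 'M[{mpoly K[4]}]_(m, n)) (r : nat)
  : Prop :=
  exists (f : 'I_r -> 'I_m) (g : 'I_r -> 'I_n),
    injective f /\ injective g /\ ~ mdvd F (\det (mxsub f g A)).

Definition rank_S (F : {mpoly K[4]}) m n (A : 'M[{mpoly K[4]}]_(m, n)) (r : nat)
  : Prop := nz_minor_S F A r /\ ~ nz_minor_S F A r.+1.

(* column j of A, with rows indexed by the monomials t^(alpha i), is the moving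
   surface  sum_i A i j t^(alpha i) ; it follows phi: *)
Definition col_follows (p : param) m n (A : 'M[{mpoly K[4]}]_(m, n))
  (alpha : 'I_m -> 'X_{1..3}) (j : 'I_n) : Prop :=
  \sum_(i < m) evp p (A i j) * 'X_[alpha i] = 0.

Definition row_monomials m (mt : nat) (alpha : 'I_m -> 'X_{1..3}) : Prop :=
  (1 <= mt)%N /\ injective alpha /\ (forall i, mdeg (alpha i) = mt) /\
  exists b1 b2 b3 : 'I_m,
    'X_0 * 'X_[alpha b3] = 'X_2 * 'X_[alpha b1] :> {mpoly K[3]} /\
    'X_1 * 'X_[alpha b3] = 'X_2 * 'X_[alpha b2] :> {mpoly K[3]}.

Definition col_homog m n (A : 'M[{mpoly K[4]}]_(m, n)) (j : 'I_n) : Prop :=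
  exists dj : nat, (1 <= dj)%N /\ forall i, A i j \is dj.-homog.

Definition inversion_matrix (p : param) (F : {mpoly K[4]}) n
  (M : 'M[{mpoly K[4]}]_(n.+1, n)) : Prop :=
  (exists (mt : nat) (alpha : 'I_n.+1 -> 'X_{1..3}),
     row_monomials mt alpha /\
     forall j, col_homog M j /\ col_follows p M alpha j) /\
  rank_S F M n.

(* implicitization matrix, d = n.+1; column 0 is P, the others are M_1..M_{d-1} *)
Definition implicitization_matrix (p : param) (F : {mpoly K[4]}) n
  (M : 'M[{mpoly K[4]}]_(n.+1)) : Prop :=
  (exists (mt : nat) (alpha : 'I_n.+1 -> 'X_{1..3}),
     row_monomials mt alpha /\
     col_homog M 0 /\
     forall j : 'I_n, col_homog M (lift 0 j) /\ col_follows p M alpha (lift 0 j)) /\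
  (exists (delta : nat) (c : K), (1 <= delta)%N /\ c != 0 /\
     \det M = c *: F ^+ delta) /\
  (forall delta c, c != 0 -> \det M = c *: F ^+ delta -> birational p -> delta = 1%N).

Definition is_gcd_of k (a : 'I_k -> {mpoly K[4]}) (G : {mpoly K[4]}) : Prop :=
  (forall i, mdvd G (a i)) /\
  forall H, (forall i, mdvd H (a i)) -> mdvd H G.

End Defs.

(* Main.v *)
Require Import Defs.
From HB Require Import structures.
From mathcomp Require Import all_boot all_order all_algebra all_fingroup.
From mathcomp Require Import mpoly.
From Stdlib Require Import Classical.
From mathcomp Require Import zify ring.
Set Implicit Arguments. Unset Strict Implicit. Unset Printing Implicit Defensive.
Import Order.TTheory GRing.Theory.
Local Open Scope ring_scope.

Lemma ex_min (P : nat -> Prop) :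
  (exists n, P n) -> exists n, P n /\ forall m, (m < n)%N -> ~ P m.
Proof.
move=> [n Pn]; apply: NNPP => H.
have: forall k, forall m, (m <= k)%N -> ~ P m.
  elim=> [|k IH] m.
    by rewrite leqn0 => /eqP -> P0; apply: H; exists 0%N; split.
  rewrite leq_eqVlt => /orP[/eqP -> Pk|]; last by apply: IH.
  apply: H; exists k.+1; split=> // m' Hm'; apply: IH; by rewrite -ltnS.
by move/(_ n n (leqnn n)).
Qed.

Section Dvd.
Variable R : idomainType.
Definition dv (a b : R) := exists c, b = a * c.
Definition irr (a : R) := a != 0 /\ a \isn't a GRing.unit /\
  forall b c, a = b * c -> b \is a GRing.unit \/ c \is a GRing.unit.
Definition prm (a : R) := a != 0 /\ a \isn't a GRing.unit /\
  forall b c, dv a (b * c) -> dv a b \/ dv a c.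
Definition factR := forall a : R, a != 0 -> exists u (s : seq R),
  u \is a GRing.unit /\ (forall x, x \in s -> prm x) /\ a = u * \prod_(x <- s) x.
Definition irrprm := forall a : R, irr a -> prm a.

Lemma dv_refl a : dv a a. Proof. by exists 1; rewrite mulr1. Qed.
Lemma dv0 a : dv a 0. Proof. by exists 0; rewrite mulr0. Qed.
Lemma dv_trans a b c : dv a b -> dv b c -> dv a c.
Proof. by move=> [x ->] [y ->]; exists (x * y); rewrite mulrA. Qed.
Lemma dv_mulr a b c : dv a b -> dv a (b * c).
Proof. by move=> [x ->]; exists (x * c); rewrite mulrA. Qed.
Lemma dv_mull a b c : dv a b -> dv a (c * b).
Proof. by rewrite mulrC; apply: dv_mulr. Qed.
Lemma dv_add a b c : dv a b -> dv a c -> dv a (b + c).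
Proof. by move=> [x ->] [y ->]; exists (x + y); rewrite mulrDr. Qed.
Lemma dv_opp a b : dv a b -> dv a (- b).
Proof. by move=> [x ->]; exists (- x); rewrite mulrN. Qed.
Lemma dv_sub a b c : dv a b -> dv a c -> dv a (b - c).
Proof. by move=> h1 h2; apply: dv_add => //; apply: dv_opp. Qed.
Lemma dv_sum I (r : seq I) (P : pred I) (f : I -> R) a :
  (forall i, P i -> dv a (f i)) -> dv a (\sum_(i <- r | P i) f i).
Proof.
move=> h; apply: (big_ind (dv a)); [exact: dv0 | exact: dv_add | exact: h].
Qed.
Lemma dv_unit a u b : u \is a GRing.unit -> dv a (u * b) -> dv a b.
Proof.
move=> uu [x e]; exists (u^-1 * x).
by rewrite mulrCA -e mulrA mulVr ?mul1r.
Qed.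
Lemma unit_dv u b : u \is a GRing.unit -> dv u b.
Proof. by move=> uu; exists (u^-1 * b); rewrite mulrA divrr ?mul1r. Qed.
Lemma dv_cancel a b c : a != 0 -> dv (a * b) (a * c) -> dv b c.
Proof. by move=> a0 [x]; rewrite -mulrA => /(mulfI a0) ->; exists x. Qed.
Lemma dv_neq0 a b : b != 0 -> dv a b -> a != 0.
Proof. by move=> b0 [x e]; apply: contraNneq b0 => a0; rewrite e a0 mul0r. Qed.

Lemma irr_prm_of_fact : factR -> irrprm.
Proof.
move=> hf a [a0 [anu airr]].
have [u [s [uu [ps e]]]] := hf a a0.
case: s ps e => [|x s] ps e.
  by move: anu; rewrite e big_nil mulr1 uu.
have px : prm x by apply: ps; rewrite inE eqxx.
move: e; rewrite big_cons mulrCA => e.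
have [xu|wu] := airr _ _ e.
  by case: px => _ [/negP].
set w := u * _ in e wu.
split=> //; split=> // b c hbc.
have xa : dv x a by exists w.
have [h|h] := px.2.2 b c (dv_trans xa hbc).
  left; move: h => [y ->]; exists (w^-1 * y).
  by rewrite e -mulrA (mulrA w) divrr ?mul1r.
right; move: h => [y ->]; exists (w^-1 * y).
by rewrite e -mulrA (mulrA w) divrr ?mul1r.
Qed.

End Dvd.

Section Iso.
Variables B C : idomainType.
Variable phi : B -> C.
Hypothesis phi0 : phi 0 = 0.
Hypothesis phi1 : phi 1 = 1.
Hypothesis phiM : forall a b, phi (a * b) = phi a * phi b.
Hypothesis phi_inj : injective phi.
Hypothesis phi_surj : forall y, exists x, phi x = y.

Lemma unit_iso a : (phi a \is a GRing.unit) = (a \is a GRing.unit).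
Proof.
apply/idP/idP => /unitrPr [y hy]; apply/unitrPr.
  have [x hx] := phi_surj y; exists x; apply: phi_inj.
  by rewrite phiM hx hy phi1.
by exists (phi y); rewrite -phiM hy phi1.
Qed.

Lemma neq0_iso a : (phi a != 0) = (a != 0).
Proof.
apply/idP/idP; apply: contra_neq; first by move=> ->.
by rewrite -phi0; apply: phi_inj.
Qed.

Lemma dv_iso a b : dv (phi a) (phi b) <-> dv a b.
Proof.
split=> [[y e]|[x ->]]; last by exists (phi x); rewrite phiM.
have [x hx] := phi_surj y; exists x; apply: phi_inj.
by rewrite phiM hx.
Qed.

Lemma irr_iso a : irr a -> irr (phi a).
Proof.
move=> [a0 [anu airr]]; split; first by rewrite neq0_iso.
split; first by rewrite unit_iso.
move=> b c e.
have [b' hb] := phi_surj b; have [c' hc] := phi_surj c.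
have : a = b' * c' by apply: phi_inj; rewrite phiM hb hc.
by move/airr; rewrite -hb -hc !unit_iso.
Qed.

Lemma prm_iso a : prm (phi a) -> prm a.
Proof.
move=> [a0 [anu ap]]; split; first by rewrite -neq0_iso.
split; first by rewrite -unit_iso.
move=> b c /dv_iso; rewrite phiM => /ap [] /dv_iso; by [left|right].
Qed.

Lemma irrprm_iso : irrprm C -> irrprm B.
Proof. by move=> h a /irr_iso /h /prm_iso. Qed.

End Iso.

Section PolyUFD.
Variable A : idomainType.
Implicit Types (P Q F G : {poly A}).

Lemma polyC_unit (c : A) : (c%:P \is a GRing.unit) = (c \is a GRing.unit).
Proof.
rewrite poly_unitE coefC /= size_polyC.
by case: (eqVneq c 0) => [->|_] //=; rewrite unitr0.
Qed.

Lemma unit_size1 P : P \is a GRing.unit -> size P = 1%N.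
Proof. by rewrite poly_unitE => /andP[/eqP]. Qed.

Lemma dvC (c : A) P : dv c%:P P <-> forall i, dv c P`_i.
Proof.
split=> [[Q ->] i|h]; first by rewrite coefCM; exists Q`_i.
have h' : forall i, exists x, P`_i == c * x.
  by move=> i; have [x e] := h i; exists x; apply/eqP.
exists (\poly_(i < size P) xchoose (h' i)); apply/polyP => i.
rewrite coefCM coef_poly; case: ltnP => hi.
  exact/eqP/(xchooseP (h' i)).
by rewrite mulr0 nth_default.
Qed.

Lemma prmC (c : A) : prm c -> prm (c%:P).
Proof.
move=> [c0 [cnu cp]]; split; first by rewrite polyC_eq0.
split; first by rewrite polyC_unit.
move=> P Q hPQ; apply: NNPP => /not_or_and [nP nQ].
have [i0 [hi0 mi0]] : exists i, ~ dv c P`_i /\ forall m, (m < i)%N -> ~ ~ dv c P`_m.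
  apply: ex_min; apply: NNPP => hn; apply: nP; apply/dvC => i.
  by apply: NNPP => hi; apply: hn; exists i.
have [j0 [hj0 mj0]] : exists i, ~ dv c Q`_i /\ forall m, (m < i)%N -> ~ ~ dv c Q`_m.
  apply: ex_min; apply: NNPP => hn; apply: nQ; apply/dvC => i.
  by apply: NNPP => hi; apply: hn; exists i.
have := (proj1 (dvC _ _) hPQ) (i0 + j0)%N.
rewrite coefM (bigD1 (Ordinal (leq_addr j0 i0.+1))) //= addKn => hs.
have hr : dv c (\sum_(i < (i0 + j0).+1 | i != Ordinal (leq_addr j0 i0.+1))
                  P`_i * Q`_(i0 + j0 - i)).
  apply: dv_sum => i hi; case: (ltngtP i i0) => h.
  - by apply: dv_mulr; apply: NNPP; apply: mi0.
  - apply: dv_mull; apply: NNPP; apply: mj0.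
    by move: (ltn_ord i) h; move: (nat_of_ord i) => ii; lia.
  - by move: hi; rewrite -val_eqE /= h eqxx.
have := dv_sub hs hr; rewrite addrK => /cp [] //.
Qed.

Lemma size_nonunit P : (1 < size P)%N -> P \isn't a GRing.unit.
Proof. by move=> h; apply/negP => /unit_size1 e; rewrite e in h. Qed.

Variable F : {poly A}.
Hypothesis irrF : irr F.
Hypothesis sF : (1 < size F)%N.

Lemma strip (s : seq A) (u : A) W :
  (forall x, x \in s -> prm x) -> u \is a GRing.unit ->
  dv F ((u * \prod_(x <- s) x)%:P * W) -> dv F W.
Proof.
elim: s W => [|x s IH] W ps uu.
  by rewrite big_nil mulr1; apply: dv_unit; rewrite polyC_unit.
rewrite big_cons mulrCA polyCM -mulrA => [[Q e]].
have px : prm x%:P by apply: prmC; apply: ps; rewrite inE eqxx.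
have x0 : x%:P != 0 by case: px.
have [[F' eF]|[Q' eQ]] := px.2.2 F Q (ex_intro _ _ (esym e)).
  have [] := irrF.2.2 _ _ eF; first by case: px => _ [/negP].
  by move=> /unit_size1; move: sF; rewrite eF size_Cmul -?(polyC_eq0 x) // => h e1; rewrite e1 in h.
apply: IH => //; first by move=> y hy; apply: ps; rewrite inE hy orbT.
exists Q'; apply: (mulfI x0); by rewrite e eQ mulrCA.
Qed.

Lemma strip2 (s : seq A) (u : A) Q Rr :
  (forall x, x \in s -> prm x) -> u \is a GRing.unit ->
  (u * \prod_(x <- s) x)%:P * F = Q * Rr -> (1 < size Rr)%N -> dv F Rr.
Proof.
elim: s Q Rr => [|x s IH] Q Rr ps uu.
  rewrite big_nil mulr1 => e sR.
  have eF : F = (u^-1%:P * Q) * Rr.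
    by rewrite -mulrA -e mulrA -polyCM mulVr ?mul1r.
  have [h|h] := irrF.2.2 _ _ eF; last by move: (unit_size1 h) sR => ->.
  exists (u^-1%:P * Q)^-1; by rewrite eF mulrC mulrA mulVr ?mul1r.
rewrite big_cons mulrCA polyCM -mulrA => e sR.
have px : prm x%:P by apply: prmC; apply: ps; rewrite inE eqxx.
have x0 : x%:P != 0 by case: px.
have ps' : forall y, y \in s -> prm y by move=> y hy; apply: ps; rewrite inE hy orbT.
have [[Q' eQ]|[R' eR]] := px.2.2 Q Rr (ex_intro _ _ (esym e)).
  apply: (IH Q') => //; apply: (mulfI x0); by rewrite e eQ mulrA.
have : dv F R'.
  apply: (IH Q) => //; last by move: sR; rewrite eR size_Cmul // -(polyC_eq0 x).
  apply: (mulfI x0); by rewrite e eR mulrCA.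
by move=> [y ey]; rewrite eR ey; exists (x%:P * y); rewrite mulrCA.
Qed.

Hypothesis hfA : factR A.

Lemma bez G : ~ dv F G -> exists (r : A) u v, r != 0 /\ u * F + v * G = r%:P.
Proof.
move=> nFG; apply: NNPP => H.
have F0 : F != 0 by case: irrF.
have [n0 [[u0 [v0 [eR0 sR0]]] mn0]] : exists n, (exists u v, u * F + v * G != 0 /\ size (u * F + v * G) = n)
   /\ forall m, (m < n)%N -> ~ (exists u v, u * F + v * G != 0 /\ size (u * F + v * G) = m).
  by apply: ex_min; exists (size F), 1, 0; rewrite mul1r mul0r addr0.
set R0 := u0 * F + v0 * G in eR0 sR0.
have s2 : (1 < size R0)%N.
  rewrite ltnNge; apply/negP => h.
  have : size R0 == 1%N by rewrite eqn_leq h lt0n size_poly_eq0 eR0.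
  move/size_poly1P => [c c0 ec]; apply: H; exists c, u0, v0; split=> //.
have lc0 : lead_coef R0 != 0 by rewrite lead_coef_eq0.
have key : forall X, forall a b, a * F + b * G = X ->
    exists k : nat, exists q, (lead_coef R0 ^+ k)%:P * X = q * R0.
  move=> X a b eX.
  exists (scalp X R0), (X %/ R0).
  have e := Pdiv.Idomain.divp_eq X R0.
  set cc := (lead_coef R0 ^+ scalp X R0)%:P.
  have hX : X %% R0 = (a * cc - X %/ R0 * u0) * F + (b * cc - X %/ R0 * v0) * G.
    have -> : X %% R0 = (lead_coef R0 ^+ scalp X R0) *: X - X %/ R0 * R0.
      by rewrite e addrAC subrr add0r.
    rewrite -mul_polyC -/cc -eX /R0; ring.
  have r0 : X %% R0 = 0.
    apply: NNPP => /eqP hr; apply: (mn0 (size (X %% R0))).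
      by rewrite -sR0 ltn_modp.
    by exists (a * cc - X %/ R0 * u0), (b * cc - X %/ R0 * v0); rewrite -hX.
  by rewrite mul_polyC e r0 addr0.
have [k [q eq]] := key F 1 0 ltac:(by rewrite mul1r mul0r addr0).
have [k' [q' eq']] := key G 0 1 ltac:(by rewrite mul1r mul0r add0r).
have c0 : forall k, lead_coef R0 ^+ k != 0 by move=> j; apply: expf_neq0.
have [u [s [uu [ps es]]]] := hfA (c0 k).
have FR : dv F R0 by apply: (strip2 ps uu (Q := q)) => //; move: eq; rewrite es.
have [u' [s' [uu' [ps' es']]]] := hfA (c0 k').
apply: nFG; apply: (strip ps' uu'); move: eq'; rewrite es' => ->.
by apply: dv_mull.
Qed.

Lemma irr_prm_big : prm F.
Proof.
have [F0 [Fnu _]] := irrF; split=> //; split=> // G H hGH.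
apply: NNPP => /not_or_and [nG nH]; apply: nH.
have [r [u [v [r0 e]]]] := bez nG.
have [w [s [uw [ps es]]]] := hfA r0.
apply: (strip ps uw); rewrite -es -e mulrDl -mulrA (mulrC v) -mulrA.
apply: dv_add; first by exists (u * H); rewrite mulrCA.
by rewrite mulrCA; apply: dv_mull.
Qed.

End PolyUFD.

Lemma irrprm_poly (A : idomainType) : factR A -> irrprm {poly A}.
Proof.
move=> hf F irrF.
case: (ltnP 1 (size F)) => h; first exact: irr_prm_big.
have [F0 [Fnu Firr]] := irrF.
have : size F == 1%N by rewrite eqn_leq h lt0n size_poly_eq0.
move/size_poly1P => [c c0 ec]; rewrite ec; apply: prmC.
apply: (irr_prm_of_fact hf); split=> //; split.
  by rewrite -polyC_unit -ec.
move=> b d e; have := Firr b%:P d%:P; rewrite ec e polyCM => /(_ erefl).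
by rewrite !polyC_unit.
Qed.

Section MU.
Variable K : fieldType.

Lemma mpoly_unitE' n (p : {mpoly K[n]}) :
  (p \is a GRing.unit) = (p != 0) && (msize p <= 1)%N.
Proof.
apply/idP/idP.
  move=> /unitrP [q [e1 e2]].
  have p0 : p != 0 by apply: contraTneq isT => p0; move: e2; rewrite p0 mul0r => /eqP; rewrite eq_sym oner_eq0.
  have q0 : q != 0 by apply: contraTneq isT => q0; move: e2; rewrite q0 mulr0 => /eqP; rewrite eq_sym oner_eq0.
  rewrite p0 /=; have := congr1 (fun x => msize x) e2; rewrite msizeM // msize1.
  by rewrite (mpolySpred _ p0) (mpolySpred _ q0) addSn addnS /= => [[]]; lia.
move=> /andP [p0 h]; have e := msize1_polyC h.
have c0 : p@_0 != 0 by apply: contraNneq p0 => c0; rewrite e c0 mpolyC0.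
rewrite e; set c := p@_0 in c0 *.
by apply/unitrP; exists c^-1%:MP; rewrite -!mpolyCM mulVf // mulfV.
Qed.

Lemma factR_mpoly n : irrprm {mpoly K[n]} -> factR {mpoly K[n]}.
Proof.
move=> hip.
suff : forall k (a : {mpoly K[n]}), (msize a < k)%N -> a != 0 -> exists u (s : seq {mpoly K[n]}),
  u \is a GRing.unit /\ (forall x, x \in s -> prm x) /\ a = u * \prod_(x <- s) x.
  by move=> h a; apply: (h (msize a).+1).
elim=> [|k IH] a //; rewrite ltnS => ha a0.
case: (boolP (a \is a GRing.unit)) => au.
  by exists a, [::]; rewrite big_nil mulr1.
case: (classic (irr a)) => ai.
  exists 1, [:: a]; rewrite big_seq1 mul1r unitr1; split=> //; split=> // x.
  by rewrite inE => /eqP ->; apply: hip.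
have [b [c [e [bu cu]]]] : exists b c, a = b * c /\ b \isn't a GRing.unit /\ c \isn't a GRing.unit.
  apply: NNPP => hn; apply: ai; split=> //; split=> // b c e.
  apply: NNPP => /not_or_and [hb hc]; apply: hn; exists b, c; split=> //.
  by split; apply/negP.
have b0 : b != 0 by apply: contraNneq a0 => b0; rewrite e b0 mul0r.
have c0 : c != 0 by apply: contraNneq a0 => c0; rewrite e c0 mulr0.
have sb : (1 < msize b)%N by move: bu; rewrite mpoly_unitE' b0 /= -ltnNge.
have sc : (1 < msize c)%N by move: cu; rewrite mpoly_unitE' c0 /= -ltnNge.
have ea : msize a = (msize b + msize c).-1 by rewrite e msizeM.
have [ub [sb' [ubu [psb eb]]]] := IH b ltac:(lia) b0.
have [uc [sc' [ucu [psc ec]]]] := IH c ltac:(lia) c0.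
exists (ub * uc), (sb' ++ sc'); split; first by rewrite unitrM ubu ucu.
split; first by move=> x; rewrite mem_cat => /orP [] ?; [apply: psb|apply: psc].
by rewrite big_cat /= e eb ec; ring.
Qed.

Lemma irrprm_mpoly0 : irrprm {mpoly K[0]}.
Proof.
move=> p [p0 [pnu _]]; exfalso; move/negP: pnu; apply.
rewrite mpoly_unitE' p0 /=.
have -> : p = (p@_0)%:MP.
  apply/mpolyP => m; rewrite mcoeffC.
  have -> : m = 0%MM by apply/mnmP => -[].
  by rewrite eqxx mulr1.
by rewrite msizeC; case: (_ != 0).
Qed.

Section Muni.
Variable n : nat.

Definition mres (m : 'X_{1..n.+1}) : 'X_{1..n} :=
  [multinom m (widen_ord (leqnSn n) i) | i < n].

Lemma muniX (m : 'X_{1..n.+1}) : muni ('X_[m] : {mpoly K[n.+1]}) = 'X_[mres m] *: 'X^(m ord_max).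
Proof. by rewrite muniE msuppX big_seq1 mcoeffX eqxx scale1r. Qed.

Lemma mres_eq (m m0 : 'X_{1..n.+1}) : (m == m0) = (mres m == mres m0) && (m ord_max == m0 ord_max).
Proof.
apply/eqP/andP => [->|[/eqP e1 /eqP e2]]; first by [].
apply/mnmP => i; case: (ltnP i n) => hi.
  have -> : i = widen_ord (leqnSn n) (Ordinal hi) by apply: val_inj.
  by move/mnmP: e1 => /(_ (Ordinal hi)); rewrite /mres !mnmE.
have -> : i = ord_max by apply: val_inj => /=; have := ltn_ord i; lia.
by [].
Qed.

Lemma muni_coef (p : {mpoly K[n.+1]}) (m0 : 'X_{1..n.+1}) :
  ((muni p)`_(m0 ord_max))@_(mres m0) = p@_m0.
Proof.
rewrite muniE coef_sum raddf_sum /=.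
transitivity (mcoeff m0 (\sum_(m <- msupp p) p@_m *: 'X_[m])); last by rewrite -mpolyE.
rewrite raddf_sum /=; apply: eq_bigr => m _.
rewrite coefZ coefXn -/(mres m) [RHS]mcoeffZ mcoeffX mres_eq [m ord_max == _]eq_sym.
case: (m0 ord_max == m ord_max); rewrite ?mulr1 ?mulr0 ?andbT ?andbF /= ?mulr0 ?mcoeff0 //.
by rewrite mcoeffZ mcoeffX.
Qed.

Lemma muni_inj : injective (@muni n K).
Proof.
move=> p q e; apply/mpolyP => m.
by rewrite -muni_coef e muni_coef.
Qed.

Lemma muni_mwiden (c : {mpoly K[n]}) : muni (mwiden c) = c%:P.
Proof.
elim/mpolyind: c => [|c m q _ _ IH]; first by rewrite !raddf0.
rewrite raddfD /= muniD IH polyCD; congr (_ + _).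
rewrite -mul_mpolyC rmorphM /= mwidenC mwidenX muniM muniC muniX.
have -> : mres (mnmwiden m) = m by apply/mnmP => i; rewrite /mres mnmE mnmwiden_widen.
by rewrite mnmwiden_ordmax expr0 alg_polyC -polyCM mul_mpolyC.
Qed.

Lemma muni_Xmax : muni ('X_ord_max : {mpoly K[n.+1]}) = 'X.
Proof.
rewrite muniX (_ : U_(ord_max)%MM ord_max = 1%N); last by rewrite mnm1E eqxx.
rewrite expr1.
have -> : mres U_(ord_max) = 0%MM.
  apply/mnmP => i; rewrite /mres !mnmE.
  by case: eqP => // /(congr1 val) /=; have := ltn_ord i; lia.
by rewrite mpolyX0 scale1r.
Qed.

Lemma muni_surj (q : {poly {mpoly K[n]}}) : exists p, muni p = q.
Proof.
exists (\sum_(i < size q) mwiden q`_i * 'X_ord_max ^+ i).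
rewrite raddf_sum /=.
transitivity (\sum_(i < size q) q`_i *: 'X^i); last by rewrite -poly_def coefK.
apply: eq_bigr => i _.
by rewrite muniM muni_mwiden rmorphXn /= muni_Xmax mul_polyC.
Qed.

End Muni.

Lemma irrprm_mpoly n : irrprm {mpoly K[n]}.
Proof.
elim: n => [|n IH]; first exact: irrprm_mpoly0.
apply: (@irrprm_iso _ _ (@muni n K)).
- exact: muni0.
- exact: muni1.
- exact: muniM.
- exact: muni_inj.
- exact: muni_surj.
apply: irrprm_poly; exact: factR_mpoly.
Qed.

End MU.

Section Kernel.
Variable K : fieldType.

Lemma perm_ext (f : 'I_3 -> 'I_4) : injective f ->
  exists t : 'S_4, forall i : 'I_3, t (widen_ord (leqnSn 3) i) = f i.
Proof.
move=> finj.
have [z hz] : exists z : 'I_4, z \notin codom f.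
  apply: NNPP => h.
  have hc : forall z : 'I_4, z \in codom f by move=> z; apply: NNPP => hz; apply: h; exists z; apply/negP.
  have : #|codom f| = 4%N.
    by rewrite -[RHS](card_ord 4); apply: eq_card => z; rewrite hc inE.
  by rewrite card_codom // card_ord.
pose h (x : 'I_4) : 'I_4 := if (x < 3)%N =P true is ReflectT hx then f (Ordinal hx) else z.
have hinj : injective h.
  move=> x y; rewrite /h.
  case: eqP => hx; case: eqP => hy.
  - by move/finj => /(congr1 val) /= e; apply: val_inj.
  - by move=> e; move: hz; rewrite -e codom_f.
  - by move=> e; move: hz; rewrite e codom_f.
  - by move=> _; apply: val_inj => /=; move/negP: hx; move/negP: hy; have := ltn_ord x; have := ltn_ord y; lia.
exists (perm hinj) => i; rewrite permE /h.
case: eqP => hx; last by exfalso; apply: hx; exact: (ltn_ord i).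
by congr f; apply: val_inj.
Qed.

Lemma mwiden_comp (r : {mpoly K[3]}) (T : 4.-tuple {mpoly K[3]}) :
  mwiden r \mPo T = r \mPo [tuple tnth T (widen_ord (leqnSn 3) i) | i < 3].
Proof.
elim/mpolyind: r => [|c m q _ _ IH]; first by rewrite raddf0 !comp_mpoly0.
rewrite raddfD /= !comp_mpolyD IH; congr (_ + _).
rewrite -mul_mpolyC rmorphM /= mwidenC mwidenX !mul_mpolyC !comp_mpolyZ.
rewrite !comp_mpolyX big_ord_recr /= mnmwiden_ordmax expr0 mulr1.
by congr (_ *: _); apply: eq_bigr => i _; rewrite mnmwiden_widen tnth_mktuple.
Qed.

Lemma irr_of_mirr (F : {mpoly K[4]}) : mirreducible F -> irr F.
Proof.
move=> [hs hF].
have F0 : F != 0 by rewrite -msize_poly_eq0; move: hs; case: (msize F).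
split=> //; split; first by rewrite mpoly_unitE' F0 /= -ltnNge.
move=> b c e.
have b0 : b != 0 by apply: contraNneq F0 => b0; rewrite e b0 mul0r.
have c0 : c != 0 by apply: contraNneq F0 => c0; rewrite e c0 mulr0.
by case: (hF _ _ e) => h; [left|right]; rewrite mpoly_unitE' ?b0 ?c0.
Qed.

Variable p : 'I_4 -> {mpoly K[3]}.
Variable f : 'I_3 -> 'I_4.
Hypothesis finj : injective f.
Hypothesis hind : alg_indep3 (fun i => p (f i)).

Lemma evpM (a b : {mpoly K[4]}) : evp p (a * b) = evp p a * evp p b.
Proof. exact: rmorphM. Qed.
Lemma evpD (a b : {mpoly K[4]}) : evp p (a + b) = evp p a + evp p b.
Proof. exact: raddfD. Qed.

Lemma kernel_dvd (F G : {mpoly K[4]}) : mirreducible F -> evp p F = 0 ->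
  evp p G = 0 -> mdvd F G.
Proof.
move=> /irr_of_mirr irrF eF eG.
have [t ht] := perm_ext finj.
pose Phi (x : {mpoly K[4]}) := muni (msym t^-1 x).
pose E (r : {mpoly K[3]}) : {mpoly K[4]} := msym t (mwiden r).
have PhiE : forall r, Phi (E r) = r%:P.
  by move=> r; rewrite /Phi /E -msymMm mulgV msym1m muni_mwiden.
have evpE : forall r, evp p (E r) = r \mPo [tuple p (f i) | i < 3].
  move=> r; rewrite /evp /E msym_mPo mwiden_comp; congr (_ \mPo _).
  by apply: eq_mktuple => i; rewrite !tnth_mktuple ht.
have Phi0 : Phi 0 = 0 by rewrite /Phi msym0 muni0.
have Phi1 : Phi 1 = 1 by rewrite /Phi msym1 muni1.
have PhiM : forall a b, Phi (a * b) = Phi a * Phi b by move=> a b; rewrite /Phi msymM muniM.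
have Phi_inj : injective Phi.
  by move=> a b /muni_inj /inj_msym.
have Phi_surj : forall y, exists x, Phi x = y.
  move=> y; have [x hx] := muni_surj y; exists (msym t x).
  by rewrite /Phi -msymMm mulgV msym1m.
have irrPF := irr_iso Phi0 Phi1 PhiM Phi_inj Phi_surj irrF.
have hs : (1 < size (Phi F))%N.
  rewrite ltnNge; apply/negP => hle.
  have PF0 : Phi F != 0 by case: irrPF.
  have : size (Phi F) == 1%N by rewrite eqn_leq hle lt0n size_poly_eq0.
  move/size_poly1P => [c c0 ec].
  have eFE : F = E c by apply: Phi_inj; rewrite ec PhiE.
  by move: c0; rewrite (hind (G := c)) ?eqxx // -evpE -eFE.
change (dv F G); apply: (proj1 (dv_iso PhiM Phi_inj Phi_surj F G)).
apply: NNPP => hn.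
have [r [u [v [r0 e]]]] := bez irrPF hs (factR_mpoly (@irrprm_mpoly K 3)) hn.
have [u' hu] := Phi_surj u; have [v' hv] := Phi_surj v.
have : u' * F + v' * G = E r.
  apply: Phi_inj; rewrite PhiE -e -hu -hv -!PhiM.
  by rewrite /Phi msymD muniD.
move/(congr1 (evp p)); rewrite evpE evpD !evpM eF eG !mulr0 addr0 => /esym /hind.
by move/eqP: r0.
Qed.

End Kernel.

Lemma sum_delta (R : pzRingType) n (b : 'I_n) (g : 'I_n -> R) :
  \sum_i (i == b)%:R * g i = g b.
Proof.
rewrite (bigD1 b) //= eqxx mul1r big1 ?addr0 // => i /negbTE ->.
by rewrite mul0r.
Qed.

Lemma ex_max (P : nat -> Prop) (d : nat) : P 0%N -> (forall j, P j -> (j <= d)%N) ->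
  exists k, P k /\ forall j, P j -> (j <= k)%N.
Proof.
move=> P0 hb.
have h0 : P (d - d)%N by rewrite subnn.
have [m [Pm hm]] := @ex_min (fun m => P (d - m)%N) (ex_intro _ d h0).
exists (d - m)%N; split=> // j Pj; apply: NNPP => hj.
have hjd := hb j Pj.
apply: (hm (d - j)%N); first by lia.
by rewrite (_ : (d - (d - j))%N = j) //; lia.
Qed.

Lemma dv_power (R : idomainType) (F : R) : prm F -> forall d (H Q : R),
  H * Q = F ^+ d -> exists j u, (j <= d)%N /\ u \is a GRing.unit /\ H = u * F ^+ j.
Proof.
move=> [F0 [Fnu Fp]]; elim=> [|d IH] H Q e.
  exists 0%N, H; rewrite expr0 mulr1; split=> //; split=> //.
  by apply/unitrPr; exists Q; rewrite e expr0.
have : dv F (H * Q) by rewrite e exprS; exists (F ^+ d).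
case/Fp => [[H' eH]|[Q' eQ]].
  have : H' * Q = F ^+ d by apply: (mulfI F0); rewrite mulrA -eH e exprS.
  move/IH => [j [u [hj [uu eH']]]].
  by exists j.+1, u; rewrite eH eH' exprS; split=> //; split=> //; ring.
have : H * Q' = F ^+ d by apply: (mulfI F0); rewrite mulrCA -eQ e exprS.
move/IH => [j [u [hj [uu eH']]]].
by exists j, u; split=> //; lia.
Qed.

Section Homog.
Variable K : fieldType.

Lemma det_homog n (B : 'M[{mpoly K[4]}]_n) (dd : 'I_n -> nat) :
  (forall i j, B i j \is (dd j).-homog) -> \det B \is (\sum_j dd j)%N.-homog.
Proof.
move=> hB; rewrite /determinant; apply: rpred_sum => s _.
have hp : forall r : seq 'I_n, \prod_(i <- r) B i (s i) \is (\sum_(i <- r) dd (s i))%N.-homog.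
  elim=> [|x r IH]; first by rewrite !big_nil dhomog1.
  by rewrite !big_cons; apply: dhomogM.
have e : (\sum_j dd j)%N = (\sum_(i <- index_enum 'I_n) dd (s i))%N.
  by rewrite (reindex_inj (@perm_inj _ s)).
rewrite e; case: (odd_perm s); rewrite ?expr1 ?expr0 ?mulN1r ?mul1r ?dhomogN; apply: hp.
Qed.

Lemma meval0_homog n (P : {mpoly K[n]}) d : (0 < d)%N -> P \is d.-homog ->
  P.@[fun _ => 0] = 0.
Proof.
move=> d0 hP; rewrite mevalE big1_seq // => m /andP [_ hm].
have hd := dhomog_mf hP hm.
have [i hi] : exists i, (0 < m i)%N.
  apply: NNPP => h.
  have hs : (\sum_i m i)%N = d by rewrite -mdegE.
  move: hs; rewrite big1 => [|i _]; first by lia.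
  by apply/eqP; rewrite -leqn0 leqNgt; apply/negP => hi; apply: h; exists i.
rewrite (bigD1 i) //= expr0n; case: (m i) hi => // k _.
by rewrite /= mul0r mulr0.
Qed.

End Homog.

Lemma minor_perm (R : comRingType) n (A : 'M[R]_(n.+1, n)) (f : 'I_n -> 'I_n.+1)
  (g : 'I_n -> 'I_n) : injective f -> injective g ->
  exists i c, \det (mxsub f g A) = c * \det (row' i A).
Proof.
move=> finj ginj.
have [i0 hi0] : exists z : 'I_n.+1, z \notin codom f.
  apply: NNPP => h.
  have hc : forall z : 'I_n.+1, z \in codom f by move=> z; apply: NNPP => hz; apply: h; exists z; apply/negP.
  have : #|codom f| = n.+1.
    by rewrite -[RHS](card_ord n.+1); apply: eq_card => z; rewrite hc inE.
  rewrite card_codom // card_ord => e; by move: (ltnSn n); rewrite -{2}e ltnn.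
pose tau (x : 'I_n) : 'I_n := if unlift i0 (f x) is Some j then j else x.
have htau : forall x, lift i0 (tau x) = f x.
  move=> x; rewrite /tau.
  have hne : i0 != f x by apply: contraNneq hi0 => ->; exact: codom_f.
  by case: (unlift_some hne) => j -> ->.
have tinj : injective tau by move=> x y e; apply: finj; rewrite -!htau e.
exists i0, ((-1) ^+ perm.odd_perm (perm tinj) * (-1) ^+ perm.odd_perm (perm ginj)^-1).
have e1 : mxsub f g A = col_perm (perm ginj) (row_perm (perm tinj) (row' i0 A)).
  by apply/matrixP => i j; rewrite !mxE !permE htau.
rewrite e1 col_permE row_permE !det_mulmx !det_perm.
by rewrite mulrAC.
Qed.

Unset Implicit Arguments.

Lemma mX_neq0 (K : fieldType) n (m : 'X_{1..n}) : ('X_[m] : {mpoly K[n]}) != 0.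
Proof.
apply/eqP => /(congr1 (mcoeff m)); rewrite mcoeffX eqxx mcoeff0 => /eqP.
by rewrite oner_eq0.
Qed.

Lemma sign_homog (K : fieldType) (x : {mpoly K[4]}) d k : x \is d.-homog -> (-1) ^+ k * x \is d.-homog.
Proof.
move=> hx; elim: k => [|k IH]; first by rewrite expr0 mul1r.
by rewrite exprS -mulrA mulN1r dhomogN.
Qed.

Lemma cramer (K : fieldType) (p : 'I_4 -> {mpoly K[3]}) n (Ms : 'M[{mpoly K[4]}]_(n.+1, n))
  (alpha : 'I_n.+1 -> 'X_{1..3}) :
  (forall j, \sum_(i < n.+1) evp p (Ms i j) * 'X_[alpha i] = 0) ->
  forall a b : 'I_n.+1,
   'X_[alpha a] * ((-1) ^+ b * evp p (\det (row' b Ms))) =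
   'X_[alpha b] * ((-1) ^+ a * evp p (\det (row' a Ms))).
Proof.
move=> hf a b.
set T := [tuple p i | i < 4].
set v := fun i => ('X_[alpha i] : {mpoly K[3]}).
set w := fun i : 'I_n.+1 => (-1) ^+ i * evp p (\det (row' i Ms)).
set N := map_mx (comp_mpoly T) Ms.
set u := fun i : 'I_n.+1 => (i == b)%:R * v a - (i == a)%:R * v b.
set Zm := \matrix_(i, j) (if unlift 0 j is Some j' then N i j' else u i) : 'M_(n.+1).
have hZc : col' 0 Zm = N by apply/matrixP => i j; rewrite !mxE liftK /= mxE.
have hZ0 : forall i, Zm i 0 = u i by move=> i; rewrite mxE unlift_none.
have hdetZ : \det Zm = v a * w b - v b * w a.
  rewrite (expand_det_col Zm 0).
  transitivity (\sum_i u i * w i).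
    apply: eq_bigr => i _; rewrite hZ0 /cofactor hZc addn0 /N -map_row' det_map_mx.
    by [].
  rewrite /u (eq_bigr (fun i => (i == b)%:R * (v a * w i) - (i == a)%:R * (v b * w i))); last first.
    by move=> i _; rewrite mulrBl !mulrA.
  by rewrite sumrB !sum_delta.
have hvZ : (\row_i v i) *m Zm = 0.
  apply/matrixP => x j; rewrite !mxE.
  case: (unliftP 0 j) => [j' ->|->].
    rewrite (eq_bigr (fun i => evp p (Ms i j') * v i)); first by rewrite hf.
    by move=> i _; rewrite !mxE liftK /N mxE mulrC.
  rewrite (eq_bigr (fun i => (i == b)%:R * (v i * v a) - (i == a)%:R * (v i * v b))).
    by rewrite sumrB !sum_delta mulrC subrr.
  move=> i _; rewrite !mxE unlift_none /u mulrBr; congr (_ - _); ring.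
have hd0 : \det Zm = 0.
  have := congr1 (fun X => X *m \adj Zm) hvZ.
  rewrite mul0mx -mulmxA mul_mx_adj mul_mx_scalar => /matrixP /(_ 0 0).
  rewrite !mxE => /eqP; rewrite mulf_eq0 => /orP [/eqP //|].
  by rewrite (negbTE (mX_neq0 _ _ _)).
by apply/eqP; rewrite -subr_eq0 -hdetZ hd0.
Qed.

Theorem theorem4p2 (K : fieldType) (charK : [pchar K] =i pred0)
  (e : nat) (p : 'I_4 -> {mpoly K[3]})
  (hom_p : forall i, p i \is e.-homog)
  (gf : generically_finite p)
  (F : {mpoly K[4]}) (hF : implicit_equation p F)
  (n : nat) (M : 'M[{mpoly K[4]}]_(n.+1))
  (hM : implicitization_matrix p F M) :
  exists k : nat,
    (exists c : K, c != 0 /\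
       is_gcd_of (fun i : 'I_n.+1 => \det (row' i (col' 0 M))) (c *: F ^+ k)) /\
    (birational p <-> k = 0%N) /\
    (birational p <-> inversion_matrix p F (col' 0 M)).
Proof.
have [f [finj hind]] := gf.
have [kF [homF [irrF [eF _]]]] := hF.
have kd : forall G, evp p G = 0 -> mdvd F G := fun G => kernel_dvd finj hind irrF eF.
have [F0 [Fnu _]] := irr_of_mirr irrF.
have Fprm : prm F.
  split=> //; split=> // a b [c ec].
  have : evp p a * evp p b = 0 by rewrite -evpM ec evpM eF mul0r.
  by move/eqP; rewrite mulf_eq0 => /orP [] /eqP /kd; [left|right].
set Ms := col' 0 M.
set D := fun i => \det (row' i Ms).
have [[mt [alpha [rm [h0 hcols]]]] [[del [c [hdel [c0 hdet]]]] hbir]] := hM.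
have hexp : \det M = \sum_i M i 0 * ((-1) ^+ i * D i).
  by rewrite (expand_det_col M 0); apply: eq_bigr => i _; rewrite /cofactor addn0.
pose Pk j := (j <= del)%N /\ forall i, mdvd (F ^+ j) (D i).
have [k [[kdel hk] kmax]] : exists k, Pk k /\ forall j, Pk j -> (j <= k)%N.
  apply: (@ex_max Pk del); last by move=> j [].
  by split=> // i; rewrite expr0; exists (D i); rewrite mul1r.
have hgcd : is_gcd_of (fun i => D i) (1 *: F ^+ k).
  rewrite scale1r; split=> // H hH.
  have hH' : forall i, dv H (D i) := hH.
  have hdet' : dv H (F ^+ del).
    have : dv H (\det M).
      by rewrite hexp; apply: dv_sum => i _; apply: dv_mull; apply: dv_mull; exact: hH'.
    rewrite hdet -mul_mpolyC; apply: dv_unit.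
    by rewrite mpoly_unitE' mpolyC_eq0 c0 msizeC; case: (c != 0).
  have [Q eQ] := hdet'.
  have [j [u [hj [uu eH]]]] := dv_power Fprm (esym eQ).
  have Pj : Pk j.
    split=> // i; have [x ex] := hH' i.
    by exists (u * x); rewrite ex eH mulrCA mulrA.
  have hjk := kmax j Pj.
  exists (u^-1 * F ^+ (k - j)); rewrite eH.
  transitivity ((u * u^-1) * (F ^+ j * F ^+ (k - j))); first by rewrite mulrV // mul1r -exprD subnKC.
  ring.
have hb1 : birational p -> k = 0%N.
  move=> bir; have d1 := hbir del c c0 hdet bir.
  apply: NNPP => hk0.
  have hk1 : k = 1%N by move: kdel; rewrite d1; lia.
  have hx : forall i, exists x, D i == F * x.
    by move=> i; have := hk i; rewrite hk1 expr1 => -[x ex]; exists x; apply/eqP.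
  pose D' i := xchoose (hx i).
  have eD : forall i, D i = F * D' i by move=> i; apply/eqP/(xchooseP (hx i)).
  have : F * (c%:MP) = F * \sum_i M i 0 * ((-1) ^+ i * D' i).
    have hdet1 : \det M = c *: F by rewrite hdet d1 expr1.
    rewrite mulr_sumr -[LHS]mulrC mul_mpolyC -hdet1 hexp.
    by apply: eq_bigr => i _; rewrite eD; ring.
  move/(mulfI F0)/(congr1 (meval (fun _ => 0))); rewrite mevalC raddf_sum /=.
  have [d0 [hd0 hh0]] := h0.
  rewrite big1 => [|i _]; first by move/eqP; rewrite (negbTE c0).
  by rewrite mevalM (meval0_homog hd0 (hh0 i)) mul0r.
have hna : k = 0%N -> exists a, ~ mdvd F (D a).
  move=> k0; apply: NNPP => h.
  have P1 : Pk 1%N.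
    split=> // i; rewrite expr1; apply: NNPP => hn; apply: h; by exists i.
  by move: (kmax 1%N P1); rewrite k0.
have hb2 : k = 0%N -> birational p.
  move=> k0; have [a ha] := hna k0.
  have ea : evp p (D a) != 0 by apply/eqP => /kd.
  have hf : forall j, \sum_(i < n.+1) evp p (Ms i j) * 'X_[alpha i] = 0.
    move=> j; have [_ hfj] := hcols j; rewrite /col_follows in hfj.
    by rewrite (eq_bigr (fun i => evp p (M i (lift 0 j)) * 'X_[alpha i])) // => i _; rewrite /Ms mxE.
  set w := fun i : 'I_n.+1 => (-1) ^+ i * evp p (D i).
  have key : forall a b : 'I_n.+1, 'X_[alpha a] * w b = 'X_[alpha b] * w a := @cramer K p n Ms alpha hf.
  have [_ [_ [_ [b1 [b2 [b3 [e1 e2]]]]]]] := rm.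
  pose beta (i : 'I_3) := if val i == 0%N then b1 else if val i == 1%N then b2 else b3.
  have hdd : forall j : 'I_n, exists dj, [forall i, M i (lift 0 j) \is dj.-homog].
    move=> j; have [[dj [_ hj]] _] := hcols j; exists dj; apply/forallP => i; exact: hj i.
  pose dd j := xchoose (hdd j).
  have hD : forall i, D i \is (\sum_j dd j)%N.-homog.
    move=> i; apply: det_homog => x j; rewrite !mxE; exact: (forallP (xchooseP (hdd j)) _).
  exists (\sum_j dd j)%N, (fun i => (-1) ^+ beta i * D (beta i)).
  have hev : forall i, evp p ((-1) ^+ beta i * D (beta i)) = w (beta i).
    move=> i; rewrite /w evpM; congr (_ * _); rewrite /evp rmorphXn rmorphN1 //.
  split; first by move=> i; apply: sign_homog.
  have v0 : forall i, ('X_[alpha i] : {mpoly K[3]}) != 0 by move=> i; exact: mX_neq0.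
  have wa : w a != 0 by rewrite /w mulf_neq0 // signr_eq0.
  have wb3 : w b3 != 0.
    apply/eqP => h; have := key a b3; rewrite h mulr0 => /esym/eqP.
    by rewrite mulf_eq0 (negbTE (v0 _)) (negbTE wa).
  split; first by exists (Ordinal (isT : (2 < 3)%N)); rewrite hev.
  have hr : forall i : 'I_3, ('X_i : {mpoly K[3]}) * 'X_[alpha b3] = 'X_2 * 'X_[alpha (beta i)].
    move=> i; case: i => m hi; case: m hi => [|[|[|m]]] hi //.
  have X20 : ('X_2 : {mpoly K[3]}) * 'X_[alpha b3] != 0 by rewrite mulf_neq0 // mX_neq0.
  have E : forall i j : 'I_3, w (beta i) * 'X_j * ('X_2 * 'X_[alpha b3]) = ('X_i : {mpoly K[3]}) * 'X_j * w b3 * 'X_[alpha b3].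
    move=> i j.
    have -> : w (beta i) * 'X_j * ('X_2 * 'X_[alpha b3]) = 'X_j * 'X_2 * ('X_[alpha b3] * w (beta i)) by ring.
    rewrite key.
    have -> : 'X_j * 'X_2 * ('X_[alpha (beta i)] * w b3) = 'X_j * w b3 * ('X_2 * 'X_[alpha (beta i)]) by ring.
    rewrite -hr; ring.
  move=> i j; rewrite !hev; apply: (mulIf X20); rewrite E E; ring.
have hinv : k = 0%N <-> inversion_matrix p F Ms.
  split.
  - move=> k0; have [a ha] := hna k0; split.
      exists mt, alpha; split=> // j; have [[dj [hdj hj]] hfj] := hcols j; split.
        by exists dj; split=> // i; rewrite /Ms mxE; exact: hj.
      rewrite /col_follows (eq_bigr (fun i => evp p (M i (lift 0 j)) * 'X_[alpha i])) // => i _.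
      by rewrite /Ms mxE.
    split.
      exists (lift a), id; split; first exact: lift_inj.
      split=> //.
    move=> [f' [g' [_ [gi _]]]]; have := @leq_card _ _ g' gi; by rewrite !card_ord ltnn.
  - move=> [_ [[f' [g' [fi [gi hn]]]] _]]; apply: NNPP => hk0.
    have [i [c' e']] := minor_perm Ms fi gi.
    apply: hn; rewrite e'; have [x ex] := hk i.
    have ex' : \det (row' i Ms) = F ^+ k * x := ex.
    have hkk : k = k.-1.+1 by rewrite prednK // lt0n; apply/eqP.
    exists (c' * (F ^+ k.-1 * x)); rewrite ex' hkk exprS /=; ring.
exists k; split; first by exists 1; split; [exact: oner_neq0 | exact: hgcd].
split; first by split; [exact: hb1 | exact: hb2].
by split=> h; [apply/hinv/hb1 | apply/hb2/hinv].
Qed.
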